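(* Let $A\subseteq2^{\mathbb N}$ be an analytic set containing no eventually constant sequence. Then there is a continuous map $H:2^{\mathbb N}\to[\mathbb N]$ with $H^{-1}(\mathcal L_A)=2^{\mathbb N}\setminus A$ (i.e. $2^{\mathbb N}\setminus A$ is Wadge reducible to $\mathcal L_A$). In particular, if $A$ is $\mathbf\Sigma^1_1$-complete then $\mathcal L_A$ is $\mathbf\Pi^1_1$-complete. Moreover, if $A$ is Borel then $\mathcal L_A$ is Borel.
   Context: Let $\leqslant$ be the lexicographical order on $2^{\mathbb N}$ and $<$ its strict part. For $x\in2^{\mathbb N}$ let $f^+_x=\chi_{\{y:x\leqslant y\}}$ and $f^-_x=\chi_{\{y:x<y\}}$ (functions on $2^{\mathbb N}$). Fix a bijection $h:2^{<\mathbb N}\to\mathbb N$ with $h(s)<h(t)$ whenever $|s|<|t|$, and let $(s_n)_n$ be the enumeration of $2^{<\mathbb N}$ given by $s_n=h^{-1}(n)$. For $s\in2^{<\mathbb N}$ let $x^0_s=s^\frown0^\infty$ and $x^1_s=s^\frown1^\infty$. Define $f_{4n}=f^+_{x^0_{s_n}}$, $f_{4n+1}=f^+_{x^1_{s_n}}$, $f_{4n+2}=f^-_{x^0_{s_n}}$, $f_{4n+3}=f^-_{x^1_{s_n}}$. $[\mathbb N]$ is the set of infinite subsets of $\mathbb N$ (Polish subspace of $2^{\mathbb N}$), and $\mathcal L_A=\{L\in[\mathbb N]:(f_n|_A)_{n\in L}\text{ converges pointwise on }A\}$. A set is $\mathbf\Sigma^1_1$-complete (resp. $\mathbf\Pi^1_1$-complete)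 if it is $\mathbf\Sigma^1_1$ (resp. $\mathbf\Pi^1_1$) and every $\mathbf\Sigma^1_1$ (resp. $\mathbf\Pi^1_1$) subset of a Polish space is Borel reducible to it. *)

(* Defs.v *)
From Stdlib Require Import Reals List Classical ClassicalEpsilon.
Open Scope R_scope.

Definition cantor := nat -> bool.
Definition baire := nat -> nat.

Definition agree {T} (n : nat) (x y : nat -> T) : Prop :=
  forall k, (k < n)%nat -> x k = y k.

Definition open_cantor (U : cantor -> Prop) : Prop :=
  forall x, U x -> exists n, forall y, agree n x y -> U y.

Inductive borel {T : Type} (op : (T -> Prop) -> Prop) : (T -> Prop) -> Prop :=
  | borel_open : forall U, op U -> borel op U
  | borel_compl : forall B, borel op B -> borel op (fun x => ~ B x)
  | borel_cunion : forall Bs : nat -> T -> Prop,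
      (forall n, borel op (Bs n)) -> borel op (fun x => exists n, Bs n x)
  | borel_ext : forall B C, borel op B -> (forall x, B x <-> C x) -> borel op C.

Definition borel_cantor : (cantor -> Prop) -> Prop := borel open_cantor.

Definition borel_in (Y P : cantor -> Prop) : Prop :=
  exists B, borel_cantor B /\ forall x, P x <-> (Y x /\ B x).

(** [N]: infinite subsets of N, as characteristic functions *)
Definition infinite_set (L : cantor) : Prop :=
  forall m, exists n, (m <= n)%nat /\ L n = true.

Definition cont_cc (H : cantor -> cantor) : Prop :=
  forall x n, exists m, forall y, agree m x y -> agree n (H x) (H y).
Definition cont_bc (f : baire -> cantor) : Prop :=
  forall a n, exists m, forall b, agree m a b -> agree n (f a) (f b).

Definition analytic_in (Y S : cantor -> Prop) : Prop :=
  (forall x, ~ S x) \/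
  exists f : baire -> cantor, cont_bc f /\ (forall a, Y (f a)) /\
    forall x, S x <-> exists a, f a = x.
Definition analytic_cantor (S : cantor -> Prop) : Prop :=
  analytic_in (fun _ => True) S.
Definition coanalytic_in (Y P : cantor -> Prop) : Prop :=
  (forall x, P x -> Y x) /\ analytic_in Y (fun x => Y x /\ ~ P x).

Record Polish := {
  pt :> Type;
  dist : pt -> pt -> R;
  dist_nonneg : forall x y, 0 <= dist x y;
  dist_refl : forall x, dist x x = 0;
  dist_sep : forall x y, dist x y = 0 -> x = y;
  dist_sym : forall x y, dist x y = dist y x;
  dist_tri : forall x y z, dist x z <= dist x y + dist y z;
  complete : forall u : nat -> pt,
    (forall eps, eps > 0 -> exists N, forall n m, (n >= N)%nat -> (m >= N)%nat ->
        dist (u n) (u m) < eps) ->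
    exists l, forall eps, eps > 0 -> exists N, forall n, (n >= N)%nat -> dist (u n) l < eps;
  separable : forall x0 : pt, exists D : nat -> pt,
    forall x eps, eps > 0 -> exists n, dist x (D n) < eps
}.

Definition open_in (X : Polish) (U : X -> Prop) : Prop :=
  forall x, U x -> exists eps, eps > 0 /\ forall y, dist X x y < eps -> U y.
Definition borel_X (X : Polish) : (X -> Prop) -> Prop := borel (open_in X).

Definition cont_bX (X : Polish) (f : baire -> X) : Prop :=
  forall a eps, eps > 0 -> exists m, forall b, agree m a b -> dist X (f a) (f b) < eps.
Definition analytic_X (X : Polish) (S : X -> Prop) : Prop :=
  (forall x, ~ S x) \/
  exists f : baire -> X, cont_bX X f /\ forall x, S x <-> exists a, f a = x.
Definition coanalytic_X (X : Polish) (S : X -> Prop) : Prop :=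
  analytic_X X (fun x => ~ S x).

Definition borel_map (X : Polish) (f : X -> cantor) : Prop :=
  forall U, open_cantor U -> borel_X X (fun x => U (f x)).

Definition Sigma11_complete (A : cantor -> Prop) : Prop :=
  analytic_cantor A /\
  forall (X : Polish) (B : X -> Prop), analytic_X X B ->
    exists f : X -> cantor, borel_map X f /\ forall x, B x <-> A (f x).

Definition Pi11_complete_in (Y P : cantor -> Prop) : Prop :=
  coanalytic_in Y P /\
  forall (X : Polish) (B : X -> Prop), coanalytic_X X B ->
    exists f : X -> cantor, borel_map X f /\ (forall x, Y (f x)) /\
      forall x, B x <-> P (f x).

Definition lex_lt (x y : cantor) : Prop :=
  exists n, agree n x y /\ x n = false /\ y n = true.
Definition lex_le (x y : cantor) : Prop := lex_lt x y \/ forall k, x k = y k.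

Definition chi (P : Prop) : R :=
  if excluded_middle_informative P then 1 else 0.

Definition fplus (x : cantor) : cantor -> R := fun y => chi (lex_le x y).
Definition fminus (x : cantor) : cantor -> R := fun y => chi (lex_lt x y).

Definition x0s (s : list bool) : cantor :=
  fun k => if Nat.ltb k (length s) then nth k s false else false.
Definition x1s (s : list bool) : cantor :=
  fun k => if Nat.ltb k (length s) then nth k s false else true.

(** The sequence (f_n), for an enumeration hinv = h^{-1} of 2^{<N} *)
Definition fseq (hinv : nat -> list bool) (n : nat) : cantor -> R :=
  let s := hinv (n / 4)%nat in
  match (n mod 4)%nat with
  | 0%nat => fplus (x0s s)
  | 1%nat => fplus (x1s s)
  | 2%nat => fminus (x0s s)
  | _ => fminus (x1s s)
  end.

(** Convergence of (f_n|_A)_{n in L} pointwise on A (L infinite, so the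
    subsequence is indexed by L in increasing order) *)
Definition LA (hinv : nat -> list bool) (A : cantor -> Prop) (L : cantor) : Prop :=
  infinite_set L /\
  forall y, A y -> exists l : R, forall eps, eps > 0 ->
    exists N, forall n, L n = true -> (N <= n)%nat -> Rabs (fseq hinv n y - l) < eps.

Definition eventually_constant (x : cantor) : Prop :=
  exists N b, forall n, (N <= n)%nat -> x n = b.

(* Main.v *)
Require Import Defs.
From Stdlib Require Import Reals List Lra Lia Wf_nat Classical ClassicalEpsilon FunctionalExtensionality.
Import ListNotations.
Local Open Scope nat_scope.

Fixpoint prefix {T} (x : nat -> T) (n : nat) : list T :=
  match n with 0 => [] | S n => prefix x n ++ [x n] end.

Lemma prefix_length {T} (x : nat -> T) n : length (prefix x n) = n.
Proof. induction n; simpl; auto. rewrite length_app, IHn; simpl; lia. Qed.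

Lemma prefix_nth {T} (x : nat -> T) n i d : i < n -> nth i (prefix x n) d = x i.
Proof.
  induction n; intros Hi; [lia|]. simpl.
  destruct (Nat.eq_dec i n).
  - subst. rewrite app_nth2; rewrite prefix_length; [|lia]. rewrite Nat.sub_diag. reflexivity.
  - rewrite app_nth1; [|rewrite prefix_length; lia]. apply IHn; lia.
Qed.

Lemma prefix_agree {T} (x y : nat -> T) n : agree n x y -> prefix x n = prefix y n.
Proof.
  induction n; intros H; simpl; auto.
  rewrite IHn. rewrite (H n); auto. intros k Hk; apply H; lia.
Qed.

Lemma agree_prefix {T} (x y : nat -> T) n : prefix x n = prefix y n -> agree n x y.
Proof.
  intros H k Hk. rewrite <- (prefix_nth x n k (x 0)), <- (prefix_nth y n k (x 0)); auto.
  rewrite H; auto.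
Qed.

Lemma agree_mono {T} n m (x y : nat -> T) : m <= n -> agree n x y -> agree m x y.
Proof. intros Hm H k Hk; apply H; lia. Qed.

Lemma agree_sym {T} n (x y : nat -> T) : agree n x y -> agree n y x.
Proof. intros H k Hk; symmetry; auto. Qed.

Lemma agree_trans {T} n (x y z : nat -> T) : agree n x y -> agree n y z -> agree n x z.
Proof. intros H1 H2 k Hk; rewrite H1; auto. Qed.

Lemma x0s_lt s k : k < length s -> x0s s k = nth k s false.
Proof. intros H; unfold x0s. rewrite (proj2 (Nat.ltb_lt _ _) H); auto. Qed.
Lemma x0s_ge s k : length s <= k -> x0s s k = false.
Proof. intros H; unfold x0s. rewrite (proj2 (Nat.ltb_ge _ _) H); auto. Qed.
Lemma x1s_lt s k : k < length s -> x1s s k = nth k s false.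
Proof. intros H; unfold x1s. rewrite (proj2 (Nat.ltb_lt _ _) H); auto. Qed.
Lemma x1s_ge s k : length s <= k -> x1s s k = true.
Proof. intros H; unfold x1s. rewrite (proj2 (Nat.ltb_ge _ _) H); auto. Qed.

Lemma x0s_prefix (x : cantor) n : agree n x (x0s (prefix x n)).
Proof. intros k Hk. rewrite x0s_lt by (rewrite prefix_length; lia). rewrite prefix_nth; auto. Qed.
Lemma x1s_prefix (x : cantor) n : agree n x (x1s (prefix x n)).
Proof. intros k Hk. rewrite x1s_lt by (rewrite prefix_length; lia). rewrite prefix_nth; auto. Qed.

Lemma first_diff (x y : cantor) : (exists k, x k <> y k) -> exists j, x j <> y j /\ agree j x y.
Proof.
  intros [k Hk]. induction k as [k IH] using lt_wf_ind.
  destruct (classic (agree k x y)) as [Ha|Ha]; [exists k; auto|].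
  apply not_all_ex_not in Ha. destruct Ha as [i Hi].
  apply imply_to_and in Hi. destruct Hi as [Hi1 Hi2]. apply (IH i); auto.
Qed.

Lemma lex_trich (x y : cantor) : lex_lt x y \/ lex_lt y x \/ (forall k, x k = y k).
Proof.
  destruct (classic (forall k, x k = y k)) as [H|H]; [auto|].
  apply not_all_ex_not in H. destruct (first_diff x y H) as [j [Hj Ha]].
  destruct (x j) eqn:E1, (y j) eqn:E2; try congruence.
  - right; left. exists j. split; [apply agree_sym; auto|auto].
  - left. exists j. auto.
Qed.

Lemma lex_lt_trans x y z : lex_lt x y -> lex_lt y z -> lex_lt x z.
Proof.
  intros [n [Hn [H1 H2]]] [m [Hm [H3 H4]]].
  destruct (Nat.lt_trichotomy n m) as [Hl|[He|Hl]].
  - exists n. split; [|split; auto].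
    + intros k Hk. rewrite Hn by auto. apply Hm; lia.
    + rewrite <- Hm; auto.
  - subst. congruence.
  - exists m. split; [|split; auto].
    + intros k Hk. rewrite Hn by lia. apply Hm; lia.
    + rewrite Hn; auto.
Qed.

Lemma lex_lt_neq x y : lex_lt x y -> ~ (forall k, x k = y k).
Proof. intros [n [_ [H1 H2]]] H. rewrite H in H1. congruence. Qed.

Lemma lex_lt_asym x y : lex_lt x y -> ~ lex_lt y x.
Proof.
  intros H1 H2. apply (lex_lt_neq x x); [eapply lex_lt_trans; eauto|auto].
Qed.

Lemma lex_le_iff x y : lex_le x y <-> ~ lex_lt y x.
Proof.
  split.
  - intros [H|H] H'.
    + apply (lex_lt_asym _ _ H H').
    + apply (lex_lt_neq y x H'). intros k; auto.
  - intros H. destruct (lex_trich x y) as [H1|[H1|H1]]; [left; auto|tauto|right; auto].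
Qed.

Lemma lex_lt_open_r x y : lex_lt x y -> exists m, forall y', agree m y y' -> lex_lt x y'.
Proof.
  intros [n [Hn [H1 H2]]]. exists (S n). intros y' Ha. exists n. split; [|split; auto].
  - intros k Hk. rewrite Hn by auto. apply Ha; lia.
  - rewrite <- Ha by lia. auto.
Qed.

Lemma lex_lt_open_l x y : lex_lt y x -> exists m, forall y', agree m y y' -> lex_lt y' x.
Proof.
  intros [n [Hn [H1 H2]]]. exists (S n). intros y' Ha. exists n. split; [|split; auto].
  - intros k Hk. rewrite <- Hn by auto. symmetry; apply Ha; lia.
  - rewrite <- Ha by lia. auto.
Qed.

Lemma lex_lt_agree x y y' : lex_lt x y -> (forall k, y k = y' k) -> lex_lt x y'.
Proof. intros [n [Hn [H1 H2]]] He. exists n. repeat split; auto.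
  intros k Hk; rewrite Hn, He; auto. rewrite <- He; auto. Qed.
Lemma lex_lt_agree_l x x' y : lex_lt x y -> (forall k, x k = x' k) -> lex_lt x' y.
Proof. intros [n [Hn [H1 H2]]] He. exists n. repeat split; auto.
  intros k Hk; rewrite <- He, Hn; auto. rewrite <- He; auto. Qed.

Lemma x0s_ec s : eventually_constant (x0s s).
Proof. exists (length s), false. intros n Hn. apply x0s_ge; auto. Qed.
Lemma x1s_ec s : eventually_constant (x1s s).
Proof. exists (length s), true. intros n Hn. apply x1s_ge; auto. Qed.

Lemma ec_ext x y : eventually_constant x -> (forall k, x k = y k) -> eventually_constant y.
Proof. intros [N [b H]] He. exists N, b. intros n Hn; rewrite <- He; auto. Qed.

Lemma nec_neq x y : eventually_constant x -> ~ eventually_constant y -> ~ (forall k, x k = y k).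
Proof. intros H1 H2 H3. apply H2. eapply ec_ext; eauto. Qed.

Lemma nec_find y i b : ~ eventually_constant y -> exists j, i <= j /\ y j = b.
Proof.
  intros H. apply NNPP. intros H'. apply H. exists i, (negb b). intros n Hn.
  destruct (y n) eqn:E; destruct b; simpl; auto; exfalso; apply H'; exists n; split; auto.
Qed.

Lemma x0s_prefix_le (x : cantor) n : lex_le (x0s (prefix x n)) x.
Proof.
  apply lex_le_iff. intros [m [Hm [H1 H2]]].
  destruct (Nat.lt_ge_cases m n).
  - rewrite (x0s_prefix x n m) in H1 by auto. congruence.
  - rewrite x0s_ge in H2 by (rewrite prefix_length; auto). congruence.
Qed.

Lemma x1s_prefix_gt (x : cantor) n : ~ eventually_constant x -> lex_lt x (x1s (prefix x n)).
Proof.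
  intros Hx. destruct (first_diff x (x1s (prefix x n))) as [j [Hj Ha]].
  - destruct (nec_find x n false Hx) as [j [Hj1 Hj2]]. exists j.
    rewrite x1s_ge by (rewrite prefix_length; auto). congruence.
  - exists j. split; auto.
    destruct (Nat.lt_ge_cases j n).
    + exfalso. apply Hj. apply x1s_prefix; auto.
    + rewrite x1s_ge in * by (rewrite prefix_length; auto). split; auto.
      destruct (x j); congruence.
Qed.
Section Main.
Variable h : list bool -> nat.
Variable hinv : nat -> list bool.
Hypothesis h_hinv : forall n, h (hinv n) = n.
Hypothesis hinv_h : forall s, hinv (h s) = s.
Hypothesis h_mono : forall s t, (length s < length t)%nat -> (h s < h t)%nat.

Definition xp (n : nat) : cantor :=
  let s := hinv (n / 4) in
  match n mod 4 with 0 => x0s s | 1 => x1s s | 2 => x0s s | _ => x1s s end.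

Definition val n y := fseq hinv n y.

Lemma xp_ec n : eventually_constant (xp n).
Proof. unfold xp. destruct (n mod 4) as [|[|[|]]]; apply x0s_ec || apply x1s_ec. Qed.

Lemma chi_1 (P : Prop) : P -> chi P = 1%R.
Proof. intros H; unfold chi; destruct (excluded_middle_informative P); tauto. Qed.
Lemma chi_0 (P : Prop) : ~P -> chi P = 0%R.
Proof. intros H; unfold chi; destruct (excluded_middle_informative P); tauto. Qed.

Lemma val01 n y : val n y = 0%R \/ val n y = 1%R.
Proof.
  unfold val, fseq, fplus, fminus, chi.
  destruct (n mod 4) as [|[|[|]]];
  match goal with |- context [excluded_middle_informative ?P] =>
    destruct (excluded_middle_informative P) end; auto.
Qed.

Lemma val_1 n y : lex_lt (xp n) y -> val n y = 1%R.
Proof.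
  unfold val, fseq, fplus, fminus, xp. intros H.
  destruct (n mod 4) as [|[|[|]]]; apply chi_1; auto; left; auto.
Qed.

Lemma val_0 n y : lex_lt y (xp n) -> val n y = 0%R.
Proof.
  unfold val, fseq, fplus, fminus, xp. intros H.
  destruct (n mod 4) as [|[|[|]]]; apply chi_0; try (rewrite lex_le_iff; tauto);
  apply lex_lt_asym; auto.
Qed.

Lemma val_nec n y : ~ eventually_constant y ->
  (val n y = 1%R /\ lex_lt (xp n) y) \/ (val n y = 0%R /\ lex_lt y (xp n)).
Proof.
  intros Hy. destruct (lex_trich (xp n) y) as [H|[H|H]].
  - left; split; auto; apply val_1; auto.
  - right; split; auto; apply val_0; auto.
  - exfalso; apply (nec_neq _ _ (xp_ec n) Hy H).
Qed.

Lemma val1_lt n y : ~ eventually_constant y -> val n y = 1%R -> lex_lt (xp n) y.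
Proof. intros Hy H. destruct (val_nec n y Hy) as [[_ H']|[H1 _]]; auto. lra. Qed.
Lemma val0_lt n y : ~ eventually_constant y -> val n y = 0%R -> lex_lt y (xp n).
Proof. intros Hy H. destruct (val_nec n y Hy) as [[H1 _]|[_ H']]; auto. lra. Qed.

Lemma val_lc n y : ~ eventually_constant y -> exists m, forall y', agree m y y' -> val n y' = val n y.
Proof.
  intros Hy. destruct (val_nec n y Hy) as [[H1 H2]|[H1 H2]].
  - destruct (lex_lt_open_r _ _ H2) as [m Hm]. exists m. intros y' Ha.
    rewrite H1; apply val_1; auto.
  - destruct (lex_lt_open_l _ _ H2) as [m Hm]. exists m. intros y' Ha.
    rewrite H1; apply val_0; auto.
Qed.

Definition bad (L : cantor) (y : cantor) : Prop :=
  (forall k, exists n, k <= n /\ L n = true /\ val n y = 1%R) /\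
  (forall k, exists n, k <= n /\ L n = true /\ val n y = 0%R).

Definition conv (L : cantor) (y : cantor) : Prop :=
  exists l : R, forall eps, (eps > 0)%R ->
    exists N, forall n, L n = true -> (N <= n)%nat -> (Rabs (val n y - l) < eps)%R.

Lemma bad_not_conv L y : bad L y -> ~ conv L y.
Proof.
  intros [H1 H0] [l Hl]. destruct (Hl (1/2)%R) as [N HN]; [lra|].
  destruct (H1 N) as [n [Hn [Ln Vn]]]. destruct (H0 N) as [n' [Hn' [Ln' Vn']]].
  pose proof (HN n Ln Hn) as A1. pose proof (HN n' Ln' Hn') as A2.
  rewrite Vn in A1. rewrite Vn' in A2.
  apply Rabs_def2 in A1. apply Rabs_def2 in A2. lra.
Qed.

Lemma not_bad_conv L y : ~ bad L y -> conv L y.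
Proof.
  intros H. apply not_and_or in H. destruct H as [H|H];
  apply not_all_ex_not in H; destruct H as [k Hk].
  - exists 0%R. intros eps He. exists k. intros n Ln Hn.
    destruct (val01 n y) as [V|V].
    + rewrite V. rewrite Rminus_0_r, Rabs_R0; auto.
    + exfalso; apply Hk; exists n; auto.
  - exists 1%R. intros eps He. exists k. intros n Ln Hn.
    destruct (val01 n y) as [V|V].
    + exfalso; apply Hk; exists n; auto.
    + rewrite V. rewrite Rminus_diag, Rabs_R0; auto.
Qed.

Lemma LA_iff (A : cantor -> Prop) L :
  LA hinv A L <-> infinite_set L /\ forall y, A y -> ~ bad L y.
Proof.
  split.
  - intros [Hi H]. split; auto. intros y Ay Hb. apply (bad_not_conv L y Hb). apply H; auto.
  - intros [Hi H]. split; auto. intros y Ay. apply not_bad_conv; auto.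
Qed.
End Main.
Lemma fin_combine {T} (x : nat -> T) (Q : nat -> (nat -> T) -> Prop) n :
  (forall k, k < n -> exists m, forall y, agree m x y -> Q k y) ->
  exists m, forall y, agree m x y -> forall k, k < n -> Q k y.
Proof.
  induction n; intros H.
  - exists 0. intros; lia.
  - destruct IHn as [m1 Hm1]. { intros k Hk; apply H; lia. }
    destruct (H n) as [m2 Hm2]; [lia|].
    exists (max m1 m2). intros y Ha k Hk.
    destruct (Nat.eq_dec k n).
    + subst. apply Hm2. eapply agree_mono; [|eauto]; lia.
    + apply Hm1; [eapply agree_mono; [|eauto]; lia| lia].
Qed.

Lemma divmod4 a r : r < 4 -> (4 * a + r) / 4 = a /\ (4 * a + r) mod 4 = r.
Proof.
  intros Hr. assert (E : 4 * a + r = r + a * 4) by lia. rewrite E.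
  split; [rewrite Nat.div_add by lia; rewrite Nat.div_small by lia; lia|].
  rewrite Nat.Div0.mod_add. apply Nat.mod_small; auto.
Qed.

Section Main2.
Variable h : list bool -> nat.
Variable hinv : nat -> list bool.
Hypothesis h_hinv : forall n, h (hinv n) = n.
Hypothesis hinv_h : forall s, hinv (h s) = s.
Hypothesis h_mono : forall s t, (length s < length t)%nat -> (h s < h t)%nat.

Lemma h_prefix_ge (x : cantor) m : m <= h (prefix x m).
Proof.
  induction m; [lia|].
  assert (h (prefix x m) < h (prefix x (S m))); [|lia].
  apply h_mono. rewrite !prefix_length; lia.
Qed.

Lemma xp_4a a : xp hinv (4 * a) = x0s (hinv a).
Proof. unfold xp. destruct (divmod4 a 0) as [E1 E2]; [lia|]. rewrite Nat.add_0_r in *. rewrite E1, E2. auto. Qed.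
Lemma xp_4a1 a : xp hinv (4 * a + 1) = x1s (hinv a).
Proof. unfold xp. destruct (divmod4 a 1) as [E1 E2]; [lia|]. rewrite E1, E2. auto. Qed.

Definition Hmap (x : cantor) (n : nat) : bool :=
  if Nat.ltb (n mod 4) 2 then
    if list_eq_dec Bool.bool_dec (hinv (n / 4)) (prefix x (length (hinv (n / 4)))) then true else false
  else false.

Lemma Hmap_true x n : Hmap x n = true ->
  agree (length (hinv (n / 4))) x (xp hinv n).
Proof.
  unfold Hmap, xp. intros H.
  destruct (Nat.ltb (n mod 4) 2) eqn:E; [|discriminate].
  destruct (list_eq_dec Bool.bool_dec (hinv (n / 4)) (prefix x (length (hinv (n / 4))))) as [e|]; [|discriminate].
  apply Nat.ltb_lt in E.
  destruct (n mod 4) as [|[|[|]]]; try lia; rewrite e at 2;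
   [apply x0s_prefix | apply x1s_prefix].
Qed.

Lemma Hmap_4a x m : Hmap x (4 * h (prefix x m)) = true.
Proof.
  unfold Hmap. destruct (divmod4 (h (prefix x m)) 0) as [E1 E2]; [lia|].
  rewrite Nat.add_0_r in *. rewrite E1, E2. simpl. rewrite hinv_h, prefix_length.
  destruct (list_eq_dec Bool.bool_dec (prefix x m) (prefix x m)); congruence.
Qed.
Lemma Hmap_4a1 x m : Hmap x (4 * h (prefix x m) + 1) = true.
Proof.
  unfold Hmap. destruct (divmod4 (h (prefix x m)) 1) as [E1 E2]; [lia|].
  rewrite E1, E2. simpl. rewrite hinv_h, prefix_length.
  destruct (list_eq_dec Bool.bool_dec (prefix x m) (prefix x m)); congruence.
Qed.

Lemma len_bound (x : cantor) j n : 4 * h (prefix x (S j)) + 4 <= n -> j < length (hinv (n / 4)).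
Proof.
  intros Hn. destruct (Nat.lt_ge_cases j (length (hinv (n / 4)))) as [|Hl]; auto.
  exfalso. assert (Hh : h (hinv (n / 4)) < h (prefix x (S j))).
  { apply h_mono. rewrite prefix_length. lia. }
  rewrite h_hinv in Hh.
  assert (Hd : (4 * (h (prefix x (S j)) + 1)) / 4 <= n / 4).
  { apply Nat.Div0.div_le_mono. lia. }
  rewrite Nat.mul_comm, Nat.div_mul in Hd by lia. lia.
Qed.

Lemma part1 (A : cantor -> Prop) (HAnec : forall x, A x -> ~ eventually_constant x) :
  exists H : cantor -> cantor,
     cont_cc H /\ (forall x, infinite_set (H x)) /\
     (forall x, LA hinv A (H x) <-> ~ A x).
Proof.
  exists Hmap. split; [|split].
  - intros x n. destruct (fin_combine x (fun k y => Hmap x k = Hmap y k) n) as [m Hm].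
    + intros k Hk. exists (length (hinv (k / 4))). intros y Ha.
      unfold Hmap. rewrite (prefix_agree x y _ Ha). auto.
    + exists m. intros y Ha k Hk. apply Hm; auto.
  - intros x m. exists (4 * h (prefix x m)). split; [pose proof (h_prefix_ge x m); lia|].
    apply Hmap_4a.
  - intros x. rewrite LA_iff. split.
    + intros [_ H] Ax. apply (H x Ax). split.
      * intros k. exists (4 * h (prefix x k)). split; [pose proof (h_prefix_ge x k); lia|].
        split; [apply Hmap_4a|]. apply val_1. rewrite xp_4a, hinv_h.
        destruct (x0s_prefix_le x k) as [Hl|He]; auto.
        exfalso. apply (nec_neq _ _ (x0s_ec (prefix x k)) (HAnec x Ax) He).
      * intros k. exists (4 * h (prefix x k) + 1). split; [pose proof (h_prefix_ge x k); lia|].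
        split; [apply Hmap_4a1|]. apply val_0. rewrite xp_4a1, hinv_h.
        apply x1s_prefix_gt; auto.
    + intros nAx. split.
      * intros m. exists (4 * h (prefix x m)). split; [pose proof (h_prefix_ge x m); lia|].
        apply Hmap_4a.
      * intros y Ay [Hb1 Hb0].
        destruct (first_diff x y) as [j [Hj Ha]].
        { apply NNPP. intros Hn. apply nAx.
          assert (x = y) as -> ; [|auto].
          apply functional_extensionality. intros k. apply NNPP. intros Hk. apply Hn; eauto. }
        set (N := 4 * h (prefix x (S j)) + 4).
        destruct (x j) eqn:Ex, (y j) eqn:Ey; try congruence.
        -- destruct (Hb1 N) as [n [Hn [Ln Vn]]].
           assert (Hl := len_bound x j n Hn). assert (Hg := Hmap_true x n Ln).
           assert (lex_lt y (xp hinv n)).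
           { exists j. split; [|split; auto].
             - intros k Hk. rewrite <- Ha by auto. apply Hg. lia.
             - rewrite <- Hg; auto. }
           rewrite (val_0 hinv n y) in Vn; auto. lra.
        -- destruct (Hb0 N) as [n [Hn [Ln Vn]]].
           assert (Hl := len_bound x j n Hn). assert (Hg := Hmap_true x n Ln).
           assert (lex_lt (xp hinv n) y).
           { exists j. split; [|split; auto].
             - intros k Hk. rewrite <- Ha by auto. symmetry. apply Hg. lia.
             - rewrite <- Hg; auto. }
           rewrite (val_1 hinv n y) in Vn; auto. lra.
Qed.
End Main2.
Lemma divmodq q a r : r < q -> (q * a + r) / q = a /\ (q * a + r) mod q = r.
Proof.
  intros Hr. assert (E : q * a + r = r + a * q) by lia. rewrite E.
  split; [rewrite Nat.div_add by lia; rewrite Nat.div_small by lia; lia|].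
  rewrite Nat.Div0.mod_add. apply Nat.mod_small; auto.
Qed.

Lemma existsb_ext {T} (f g : T -> bool) l : (forall i, In i l -> f i = g i) -> existsb f l = existsb g l.
Proof. induction l; simpl; intros H; auto. rewrite H by auto. rewrite IHl; auto. Qed.

Section Main3.
Variable h : list bool -> nat.
Variable hinv : nat -> list bool.
Hypothesis h_hinv : forall n, h (hinv n) = n.
Hypothesis hinv_h : forall s, hinv (h s) = s.
Hypothesis h_mono : forall s t, (length s < length t)%nat -> (h s < h t)%nat.
Variable A : cantor -> Prop.
Hypothesis HAnec : forall x, A x -> ~ eventually_constant x.
Variable fA : baire -> cantor.
Hypothesis fA_cont : cont_bc fA.
Hypothesis fA_im : forall x, A x <-> exists a, fA a = x.

Definition da (b : baire) : baire := fun i => b (3 * i).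
Definition dc (b : baire) : cantor := fun i => Nat.eqb (b (3 * i + 1)) 1.
Definition dd (b : baire) : baire := fun i => b (3 * i + 2).
Definition yb b := fA (da b).
Definition tgt (i : nat) : R := if Nat.even i then 1%R else 0%R.
Definition canon (y : cantor) i := 4 * h (prefix y i) + (if Nat.even i then 0 else 1).
Definition ee b i : nat :=
  if excluded_middle_informative (i <= dd b i /\ val hinv (dd b i) (yb b) = tgt i)
  then dd b i else canon (yb b) i.
Definition Fm (b : baire) : cantor := fun k =>
  orb (dc b k) (existsb (fun i => Nat.eqb (ee b i) k) (seq 0 (S k))).

Lemma yb_A b : A (yb b).
Proof. apply fA_im. exists (da b); auto. Qed.

Lemma canon_ge y i : i <= canon y i.
Proof. unfold canon. pose proof (h_prefix_ge h h_mono y i). lia. Qed.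

Lemma canon_val y i : ~ eventually_constant y -> val hinv (canon y i) y = tgt i.
Proof.
  intros Hy. unfold canon, tgt. destruct (Nat.even i).
  - rewrite Nat.add_0_r. apply val_1. rewrite xp_4a, hinv_h.
    destruct (x0s_prefix_le y i) as [Hl|He]; auto.
    exfalso. apply (nec_neq _ _ (x0s_ec (prefix y i)) Hy He).
  - apply val_0. rewrite xp_4a1, hinv_h. apply x1s_prefix_gt; auto.
Qed.

Lemma ee_ge b i : i <= ee b i.
Proof. unfold ee. destruct excluded_middle_informative as [[H _]|]; auto. apply canon_ge. Qed.

Lemma ee_val b i : val hinv (ee b i) (yb b) = tgt i.
Proof. unfold ee. destruct excluded_middle_informative as [[_ H]|]; auto.
  apply canon_val. apply HAnec, yb_A. Qed.

Lemma Fm_ee b i : Fm b (ee b i) = true.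
Proof.
  unfold Fm. apply Bool.orb_true_iff. right. apply existsb_exists. exists i. split.
  - apply in_seq. pose proof (ee_ge b i). lia.
  - apply Nat.eqb_refl.
Qed.

Lemma Fm_inf b : infinite_set (Fm b).
Proof. intros m. exists (ee b m). split; [apply ee_ge|apply Fm_ee]. Qed.

Lemma Fm_bad b : bad hinv (Fm b) (yb b).
Proof.
  split; intros k.
  - exists (ee b (2 * k)). pose proof (ee_ge b (2*k)). split; [lia|split; [apply Fm_ee|]].
    rewrite ee_val. unfold tgt. rewrite Nat.even_mul. auto.
  - exists (ee b (2 * k + 1)). pose proof (ee_ge b (2*k+1)). split; [lia|split; [apply Fm_ee|]].
    rewrite ee_val. unfold tgt. rewrite Nat.even_add, Nat.even_mul. auto.
Qed.

Lemma ee_lc b i : exists m, forall b', agree m b b' -> ee b' i = ee b i.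
Proof.
  assert (Hy : ~ eventually_constant (yb b)) by (apply HAnec, yb_A).
  destruct (val_lc hinv (dd b i) (yb b) Hy) as [M HM].
  destruct (fA_cont (da b) (max M i)) as [m0 Hm0].
  exists (max (3 * m0) (3 * i + 3)). intros b' Ha.
  assert (Hd : dd b' i = dd b i). { unfold dd. symmetry; apply Ha. lia. }
  assert (Hya : agree (max M i) (yb b) (yb b')).
  { apply Hm0. intros k Hk. unfold da. apply Ha. lia. }
  assert (Hv : val hinv (dd b i) (yb b') = val hinv (dd b i) (yb b)).
  { apply HM. eapply agree_mono; [|eauto]; lia. }
  assert (Hp : prefix (yb b') i = prefix (yb b) i).
  { symmetry; apply prefix_agree. eapply agree_mono; [|eauto]; lia. }
  unfold ee, canon. rewrite Hd, Hv, Hp. auto.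
Qed.

Lemma Fm_cont : cont_bc Fm.
Proof.
  intros b n. destruct (fin_combine b (fun k b' => Fm b k = Fm b' k) n) as [m Hm].
  - intros k Hk.
    destruct (fin_combine b (fun i b' => ee b' i = ee b i) (S k)) as [m1 Hm1].
    { intros i _. apply ee_lc. }
    exists (max m1 (3 * k + 2)). intros b' Ha. unfold Fm.
    f_equal.
    + unfold dc. rewrite (Ha (3 * k + 1)) by lia. auto.
    + apply existsb_ext. intros i Hi. apply in_seq in Hi.
      rewrite (Hm1 b'); [auto| eapply agree_mono; [|eauto]; lia | lia].
  - exists m. intros b' Ha k Hk. apply Hm; auto.
Qed.

Lemma Fm_surj L : infinite_set L -> ~ LA hinv A L -> exists b, Fm b = L.
Proof.
  intros Hi HL. rewrite LA_iff in HL.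
  assert (exists y, A y /\ bad hinv L y) as [y [Ay Hb]].
  { apply NNPP; intros Hn. apply HL. split; auto. intros y Ay Hb. apply Hn; eauto. }
  destruct (proj1 (fA_im y) Ay) as [a Ha].
  assert (Hd : forall i, exists n, i <= n /\ L n = true /\ val hinv n y = tgt i).
  { intros i. unfold tgt. destruct (Nat.even i); [apply (proj1 Hb)| apply (proj2 Hb)]. }
  set (d := fun i => proj1_sig (constructive_indefinite_description _ (Hd i))).
  assert (Hdd : forall i, i <= d i /\ L (d i) = true /\ val hinv (d i) y = tgt i).
  { intros i. unfold d. destruct constructive_indefinite_description; auto. }
  set (b := fun j => match j mod 3 with 0 => a (j / 3) | 1 => if L (j / 3) then 1 else 0 | _ => d (j / 3) end).
  assert (Ea : da b = a).
  { apply functional_extensionality; intros i. unfold da, b.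
    destruct (divmodq 3 i 0) as [E1 E2]; [lia|]. rewrite Nat.add_0_r in *. rewrite E1, E2. auto. }
  assert (Ec : dc b = L).
  { apply functional_extensionality; intros i. unfold dc, b.
    destruct (divmodq 3 i 1) as [E1 E2]; [lia|]. rewrite E1, E2. destruct (L i); auto. }
  assert (Ed : dd b = d).
  { apply functional_extensionality; intros i. unfold dd, b.
    destruct (divmodq 3 i 2) as [E1 E2]; [lia|]. rewrite E1, E2. auto. }
  assert (Ey : yb b = y) by (unfold yb; rewrite Ea; auto).
  assert (Ee : forall i, ee b i = d i).
  { intros i. unfold ee. rewrite Ed, Ey. destruct excluded_middle_informative as [|Hn]; auto.
    exfalso; apply Hn; split; apply Hdd. }
  exists b. apply functional_extensionality; intros k. unfold Fm. rewrite Ec.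
  destruct (L k) eqn:Lk; auto. rewrite Bool.orb_false_l.
  destruct (existsb _ _) eqn:E; auto.
  apply existsb_exists in E. destruct E as [i [_ Hi2]]. apply Nat.eqb_eq in Hi2.
  rewrite Ee in Hi2. rewrite <- Hi2 in Lk. rewrite (proj1 (proj2 (Hdd i))) in Lk. discriminate.
Qed.

Lemma coanalytic_part : coanalytic_in infinite_set (LA hinv A).
Proof.
  split; [intros x [H _]; auto|].
  right. exists Fm. split; [apply Fm_cont|split; [apply Fm_inf|]].
  intros L. split.
  - intros [Hi HL]. apply Fm_surj; auto.
  - intros [b <-]. split; [apply Fm_inf|]. rewrite LA_iff. intros [_ H].
    apply (H (yb b) (yb_A b)). apply Fm_bad.
Qed.
End Main3.
Lemma open_empty : open_cantor (fun _ => False).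
Proof. intros x []. Qed.
Lemma open_full : open_cantor (fun _ => True).
Proof. intros x _. exists 0; auto. Qed.

Lemma borel_const (P : Prop) : borel_cantor (fun _ => P).
Proof.
  destruct (classic P) as [H|H].
  - apply borel_ext with (fun _ => True); [apply borel_open, open_full|tauto].
  - apply borel_ext with (fun _ => False); [apply borel_open, open_empty|tauto].
Qed.

Lemma borel_compl' B : borel_cantor B -> borel_cantor (fun x => ~ B x).
Proof. intros H; apply borel_compl; auto. Qed.

Lemma borel_cunion' (Bs : nat -> cantor -> Prop) :
  (forall n, borel_cantor (Bs n)) -> borel_cantor (fun x => exists n, Bs n x).
Proof. intros H; apply borel_cunion; auto. Qed.

Lemma borel_ext' B C : borel_cantor B -> (forall x, B x <-> C x) -> borel_cantor C.
Proof. intros; eapply borel_ext; eauto. Qed.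

Lemma borel_or B1 B2 : borel_cantor B1 -> borel_cantor B2 -> borel_cantor (fun x => B1 x \/ B2 x).
Proof.
  intros H1 H2. apply borel_ext' with (fun x => exists n, (match n with 0 => B1 | _ => B2 end) x).
  - apply borel_cunion'. intros [|n]; auto.
  - intros x; split; [intros [[|n] H]; auto|intros [H|H]; [exists 0|exists 1]; auto].
Qed.

Lemma borel_and B1 B2 : borel_cantor B1 -> borel_cantor B2 -> borel_cantor (fun x => B1 x /\ B2 x).
Proof.
  intros H1 H2. apply borel_ext' with (fun x => ~ (~ B1 x \/ ~ B2 x)).
  - apply borel_compl', borel_or; apply borel_compl'; auto.
  - intros x; tauto.
Qed.

Lemma borel_call (Bs : nat -> cantor -> Prop) :
  (forall n, borel_cantor (Bs n)) -> borel_cantor (fun x => forall n, Bs n x).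
Proof.
  intros H. apply borel_ext' with (fun x => ~ exists n, ~ Bs n x).
  - apply borel_compl', borel_cunion'. intros n; apply borel_compl'; auto.
  - intros x; split; [intros H1 n; apply NNPP; intros H2; apply H1; eauto|intros H1 [n Hn]; auto].
Qed.

Lemma borel_and_const (P : Prop) B : borel_cantor B -> borel_cantor (fun x => P /\ B x).
Proof. intros H; apply borel_and; auto; apply borel_const. Qed.

Lemma borel_imp_const (P : Prop) B : borel_cantor B -> borel_cantor (fun x => P -> B x).
Proof.
  intros H. apply borel_ext' with (fun x => ~ P \/ B x).
  - apply borel_or; auto; apply borel_const.
  - intros x; split; [intros [H1|H1]; tauto|intros H1; destruct (classic P); tauto].
Qed.

Lemma open_coord n b : open_cantor (fun L : cantor => L n = b).
Proof. intros x Hx. exists (S n). intros y Ha. rewrite <- Ha by lia. auto. Qed.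

Lemma borel_coord n b : borel_cantor (fun L : cantor => L n = b).
Proof. apply borel_open, open_coord. Qed.

Definition meas (g : cantor -> cantor) :=
  forall U, open_cantor U -> borel_cantor (fun L => U (g L)).

Lemma meas_borel g B : meas g -> borel_cantor B -> borel_cantor (fun L => B (g L)).
Proof.
  intros Hg HB. induction HB.
  - apply Hg; auto.
  - apply borel_compl'; auto.
  - apply borel_cunion'; auto.
  - apply borel_ext' with (fun L => B (g L)); auto.
Qed.

Lemma meas_const c : meas (fun _ => c).
Proof. intros U _. apply borel_const. Qed.

Lemma open_lt_r x : open_cantor (fun y => lex_lt x y).
Proof. intros y H. destruct (lex_lt_open_r x y H) as [m Hm]. exists m; auto. Qed.
Lemma open_lt_l x : open_cantor (fun y => lex_lt y x).
Proof. intros y H. destruct (lex_lt_open_l x y H) as [m Hm]. exists m; auto. Qed.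

Lemma chi_eq1 P : chi P = 1%R <-> P.
Proof. unfold chi. destruct excluded_middle_informative; split; intros; auto; try tauto. lra. Qed.

Lemma cyl_iff (s : list bool) (y : cantor) :
  prefix y (length s) = s <-> forall i, i < length s -> y i = nth i s false.
Proof.
  split.
  - intros H i Hi. rewrite <- H. rewrite prefix_nth; auto.
  - intros H. apply nth_ext with false false; [apply prefix_length|].
    intros i Hi. rewrite prefix_length in Hi. rewrite prefix_nth; auto.
Qed.

Section Borel.
Variable h : list bool -> nat.
Variable hinv : nat -> list bool.
Hypothesis h_hinv : forall n, h (hinv n) = n.
Hypothesis hinv_h : forall s, hinv (h s) = s.

Lemma borel_cyl (g : cantor -> cantor) (s : list bool) : (forall i b, borel_cantor (fun L => g L i = b)) ->
  borel_cantor (fun L => prefix (g L) (length s) = s).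
Proof.
  intros Hg. apply borel_ext' with (fun L => forall i, i < length s -> g L i = nth i s false).
  - apply borel_call; intros i. apply borel_imp_const; auto.
  - intros L. rewrite cyl_iff; tauto.
Qed.

Lemma meas_coord (g : cantor -> cantor) : (forall i b, borel_cantor (fun L => g L i = b)) -> meas g.
Proof.
  intros Hg U HU.
  apply borel_ext' with (fun L => exists m, (forall y, prefix y (length (hinv m)) = hinv m -> U y)
                                        /\ prefix (g L) (length (hinv m)) = hinv m).
  - apply borel_cunion'. intros m. apply borel_and_const. apply borel_cyl; auto.
  - intros L. split.
    + intros [m [H1 H2]]. auto.
    + intros H. destruct (HU _ H) as [n Hn]. exists (h (prefix (g L) n)).
      rewrite hinv_h, prefix_length. split; auto.
      intros y Hy. apply Hn. apply agree_prefix. symmetry; auto.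
Qed.

Lemma borel_val1 n : borel_cantor (fun y => val hinv n y = 1%R).
Proof.
  unfold val, fseq, fplus, fminus.
  destruct (n mod 4) as [|[|[|]]];
  (eapply borel_ext'; [| intros y; symmetry; apply chi_eq1]);
  try (apply borel_open, open_lt_r);
  (eapply borel_ext'; [apply borel_compl', borel_open, open_lt_l| intros y; symmetry; apply lex_le_iff]).
Qed.

Lemma borel_val0 n : borel_cantor (fun y => val hinv n y = 0%R).
Proof.
  apply borel_ext' with (fun y => ~ val hinv n y = 1%R).
  - apply borel_compl', borel_val1.
  - intros y. destruct (val01 hinv n y) as [H|H]; rewrite H; split; intros; lra.
Qed.

Lemma bad_borel (g : cantor -> cantor) : meas g -> borel_cantor (fun L => bad hinv L (g L)).
Proof.
  intros Hg.
  assert (H1 : forall n, borel_cantor (fun L => val hinv n (g L) = 1%R)).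
  { intros n. apply (meas_borel g (fun y => val hinv n y = 1%R)); auto; apply borel_val1. }
  assert (H0 : forall n, borel_cantor (fun L => val hinv n (g L) = 0%R)).
  { intros n. apply (meas_borel g (fun y => val hinv n y = 0%R)); auto; apply borel_val0. }
  unfold bad. apply borel_and; apply borel_call; intros k; apply borel_cunion'; intros n;
  apply borel_and_const; apply borel_and; try apply borel_coord; auto.
Qed.
End Borel.
Lemma prefix_firstn {T} (y : nat -> T) m n : m <= n -> firstn m (prefix y n) = prefix y m.
Proof.
  induction n; intros Hm.
  - assert (m = 0) by lia; subst; auto.
  - destruct (Nat.eq_dec m (S n)).
    + subst. apply firstn_all2. rewrite prefix_length; auto.
    + simpl. rewrite firstn_app, prefix_length. replace (m - n) with 0 by lia.
      simpl. rewrite app_nil_r. apply IHn; lia.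
Qed.

Definition zz (s : list bool) : cantor := fun k =>
  if Nat.ltb k (length s) then nth k s false else Nat.odd (k - length s).

Lemma zz_nec s : ~ eventually_constant (zz s).
Proof.
  intros [N [b H]]. assert (H1 := H (N + length s) ltac:(lia)). assert (H2 := H (S (N + length s)) ltac:(lia)).
  unfold zz in *. rewrite (proj2 (Nat.ltb_ge _ _)) in H1 by lia. rewrite (proj2 (Nat.ltb_ge _ _)) in H2 by lia.
  replace (S (N + length s) - length s) with (S N) in H2 by lia.
  replace (N + length s - length s) with N in H1 by lia.
  rewrite Nat.odd_succ, <- Nat.negb_odd in H2.
  destruct (Nat.odd N); destruct b; simpl in *; congruence.
Qed.

Lemma x0s_zz s : lex_lt (x0s s) (zz s).
Proof.
  exists (S (length s)). split; [|split].
  - intros k Hk. unfold zz. destruct (Nat.lt_ge_cases k (length s)).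
    + rewrite x0s_lt, (proj2 (Nat.ltb_lt _ _)); auto.
    + rewrite x0s_ge, (proj2 (Nat.ltb_ge _ _)) by auto. replace (k - length s) with 0 by lia. auto.
  - apply x0s_ge; lia.
  - unfold zz. rewrite (proj2 (Nat.ltb_ge _ _)) by lia. replace (S (length s) - length s) with 1 by lia. auto.
Qed.

Definition flip (y : cantor) : cantor := fun k => negb (y k).

Lemma lex_flip x y : lex_lt x y -> lex_lt (flip y) (flip x).
Proof.
  intros [n [Hn [H1 H2]]]. exists n. unfold flip. split; [|rewrite H1, H2; auto].
  intros k Hk; rewrite Hn; auto.
Qed.

Lemma flip_flip y k : flip (flip y) k = y k.
Proof. unfold flip. apply Bool.negb_involutive. Qed.

Lemma ec_flip y : eventually_constant y -> eventually_constant (flip y).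
Proof. intros [N [b H]]. exists N, (negb b). intros n Hn. unfold flip; rewrite H; auto. Qed.

Lemma nec_flip y : ~ eventually_constant y -> ~ eventually_constant (flip y).
Proof. intros H1 H2. apply H1. apply ec_flip in H2. eapply ec_ext; [eauto|]. apply flip_flip. Qed.

Section Phi.
Variable h : list bool -> nat.
Variable hinv : nat -> list bool.
Hypothesis h_hinv : forall n, h (hinv n) = n.
Hypothesis hinv_h : forall s, hinv (h s) = s.
Variable p : nat -> cantor.

Definition Tp (L : cantor) (u : list bool) : Prop :=
  exists w, forall k, exists n, k <= n /\ L n = true /\ lex_lt (p n) (x0s (u ++ w ++ [true])).
Definition bitf (L : cantor) (w : list bool) : bool :=
  if excluded_middle_informative (Tp L (w ++ [false])) then false else true.
Fixpoint pre (L : cantor) (i : nat) : list bool :=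
  match i with 0 => [] | S i => pre L i ++ [bitf L (pre L i)] end.
Definition phi (L : cantor) : cantor := fun i => bitf L (pre L i).
Definition Uset (L : cantor) (y : cantor) : Prop :=
  forall k, exists n, k <= n /\ L n = true /\ lex_lt (p n) y.

Lemma Tp_borel u : borel_cantor (fun L => Tp L u).
Proof.
  apply borel_ext' with (fun L => exists m, forall k, exists n, k <= n /\ L n = true /\
                                   lex_lt (p n) (x0s (u ++ hinv m ++ [true]))).
  - apply borel_cunion'; intros m. apply borel_call; intros k. apply borel_cunion'; intros n.
    apply borel_and_const. apply borel_and; [apply borel_coord|apply borel_const].
  - intros L. split; intros [w Hw]; [exists (hinv w); auto|exists (h w); rewrite hinv_h; auto].
Qed.

Lemma bitf_borel w b : borel_cantor (fun L => bitf L w = b).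
Proof.
  apply borel_ext' with (fun L => (b = false /\ Tp L (w ++ [false])) \/ (b = true /\ ~ Tp L (w ++ [false]))).
  - apply borel_or; apply borel_and_const; [|apply borel_compl']; apply Tp_borel.
  - intros L. unfold bitf. destruct excluded_middle_informative as [H|H]; destruct b; intuition congruence.
Qed.

Lemma pre_borel i : forall u, borel_cantor (fun L => pre L i = u).
Proof.
  induction i; intros u.
  - apply borel_ext' with (fun _ => @nil bool = u); [apply borel_const|intros; simpl; tauto].
  - apply borel_ext' with (fun L => exists m, pre L i = hinv m /\
       ((bitf L (hinv m) = false /\ u = hinv m ++ [false]) \/ (bitf L (hinv m) = true /\ u = hinv m ++ [true]))).
    + apply borel_cunion'; intros m. apply borel_and; auto.
      apply borel_or; apply borel_and; try apply bitf_borel; apply borel_const.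
    + intros L. simpl. split.
      * intros [m [E1 [[E2 E3]|[E2 E3]]]]; rewrite E1, E2, E3; auto.
      * intros E. exists (h (pre L i)). rewrite hinv_h. split; auto.
        destruct (bitf L (pre L i)); auto.
Qed.

Lemma meas_phi : meas phi.
Proof.
  apply (meas_coord h hinv hinv_h). intros i b.
  apply borel_ext' with (fun L => exists m, pre L i = hinv m /\ bitf L (hinv m) = b).
  - apply borel_cunion'; intros m. apply borel_and; [apply pre_borel|apply bitf_borel].
  - intros L. unfold phi. split.
    + intros [m [E1 E2]]. rewrite E1; auto.
    + intros E. exists (h (pre L i)). rewrite hinv_h. auto.
Qed.

Lemma phi_key L y i : ~ eventually_constant y -> Uset L y ->
  (forall z, ~ eventually_constant z -> lex_lt z y -> ~ Uset L z) ->
  bitf L (prefix y i) = y i.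
Proof.
  intros Hy HU Hmin. unfold bitf. destruct (y i) eqn:Ey.
  - destruct excluded_middle_informative as [[w Hw]|]; auto. exfalso.
    set (s := (prefix y i ++ [false]) ++ w ++ [true]).
    apply (Hmin (zz s) (zz_nec s)).
    + exists i. split; [|split; auto].
      * intros k Hk. unfold zz. rewrite (proj2 (Nat.ltb_lt _ _)).
        -- unfold s. rewrite <- app_assoc, app_nth1 by (rewrite prefix_length; auto).
           rewrite prefix_nth; auto.
        -- unfold s. rewrite !length_app, prefix_length. lia.
      * unfold zz. rewrite (proj2 (Nat.ltb_lt _ _)).
        -- unfold s. rewrite <- app_assoc, app_nth2 by (rewrite prefix_length; auto).
           rewrite prefix_length, Nat.sub_diag. auto.
        -- unfold s. rewrite !length_app, prefix_length. simpl. lia.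
    + intros k. destruct (Hw k) as [n [Hn [Ln Hl]]]. exists n. repeat split; auto.
      eapply lex_lt_trans; [eauto|]. apply x0s_zz.
  - destruct excluded_middle_informative as [|HT]; auto. exfalso. apply HT.
    destruct (nec_find y (S i) false Hy) as [j [Hj Eyj]].
    exists (skipn (S i) (prefix y j)).
    assert (E : (prefix y i ++ [false]) ++ skipn (S i) (prefix y j) ++ [true] = prefix y j ++ [true]).
    { rewrite app_assoc. f_equal.
      replace (prefix y i ++ [false]) with (prefix y (S i)) by (simpl; rewrite Ey; auto).
      rewrite <- (prefix_firstn y (S i) j) by lia. apply firstn_skipn. }
    rewrite E. intros k. destruct (HU k) as [n [Hn [Ln Hl]]]. exists n. repeat split; auto.
    eapply lex_lt_trans; [eauto|]. exists j. split; [|split; auto].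
    + intros k' Hk'. rewrite x0s_lt by (rewrite length_app, prefix_length; simpl; lia).
      rewrite app_nth1 by (rewrite prefix_length; auto). rewrite prefix_nth; auto.
    + rewrite x0s_lt by (rewrite length_app, prefix_length; simpl; lia).
      rewrite app_nth2 by (rewrite prefix_length; auto). rewrite prefix_length, Nat.sub_diag. auto.
Qed.

Lemma phi_min L y : ~ eventually_constant y -> Uset L y ->
  (forall z, ~ eventually_constant z -> lex_lt z y -> ~ Uset L z) ->
  forall i, phi L i = y i.
Proof.
  intros Hy HU Hmin.
  assert (Hp : forall i, pre L i = prefix y i).
  { induction i; simpl; auto. rewrite IHi, phi_key; auto. }
  intros i. unfold phi. rewrite Hp. apply phi_key; auto.
Qed.
End Phi.

Section Psi.
Variable h : list bool -> nat.
Variable hinv : nat -> list bool.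
Hypothesis h_hinv : forall n, h (hinv n) = n.
Hypothesis hinv_h : forall s, hinv (h s) = s.
Variable p : nat -> cantor.

Definition psi (L : cantor) : cantor := flip (phi (fun n => flip (p n)) L).
Definition Vset (L : cantor) (y : cantor) : Prop :=
  forall k, exists n, k <= n /\ L n = true /\ lex_lt y (p n).

Lemma meas_psi : meas psi.
Proof.
  apply (meas_coord h hinv hinv_h). intros i b.
  apply borel_ext' with (fun L => phi (fun n => flip (p n)) L i = negb b).
  - apply (meas_borel _ (fun y => y i = negb b)); [apply (meas_phi h hinv hinv_h)|apply borel_coord].
  - intros L. unfold psi, flip. destruct (phi _ L i), b; simpl; split; congruence.
Qed.

Lemma psi_max L y : ~ eventually_constant y -> Vset L y ->
  (forall z, ~ eventually_constant z -> lex_lt y z -> ~ Vset L z) ->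
  forall i, psi L i = y i.
Proof.
  intros Hy HV Hmax i. unfold psi. unfold flip at 1.
  rewrite (phi_min (fun n => flip (p n)) L (flip y)).
  - apply flip_flip.
  - apply nec_flip; auto.
  - intros k. destruct (HV k) as [n [Hn [Ln Hl]]]. exists n. repeat split; auto. apply lex_flip; auto.
  - intros z Hz Hlt HU. apply (Hmax (flip z) (nec_flip _ Hz)).
    + apply lex_flip in Hlt. eapply lex_lt_agree_l; [eauto|]. apply flip_flip.
    + intros k. destruct (HU k) as [n [Hn [Ln Hl]]]. exists n. repeat split; auto.
      apply lex_flip in Hl. eapply lex_lt_agree; [eauto|]. apply flip_flip.
Qed.
End Psi.
Section BorelPart.
Variable h : list bool -> nat.
Variable hinv : nat -> list bool.
Hypothesis h_hinv : forall n, h (hinv n) = n.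
Hypothesis hinv_h : forall s, hinv (h s) = s.
Variable A : cantor -> Prop.
Hypothesis HAnec : forall x, A x -> ~ eventually_constant x.
Hypothesis HAb : borel_cantor A.

Definition px := xp hinv.

Lemma bad_UV L y : ~ eventually_constant y ->
  (bad hinv L y <-> Uset px L y /\ Vset px L y).
Proof.
  intros Hy. unfold bad, Uset, Vset, px. split.
  - intros [H1 H0]. split; intros k.
    + destruct (H1 k) as [n [? [? ?]]]. exists n. repeat split; auto. apply val1_lt; auto.
    + destruct (H0 k) as [n [? [? ?]]]. exists n. repeat split; auto. apply val0_lt; auto.
  - intros [H1 H0]. split; intros k.
    + destruct (H1 k) as [n [? [? ?]]]. exists n. repeat split; auto. apply val_1; auto.
    + destruct (H0 k) as [n [? [? ?]]]. exists n. repeat split; auto. apply val_0; auto.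
Qed.

Definition Ex m := exists a, A a /\ prefix a (length (hinv m)) = hinv m.
Definition am m : cantor := epsilon (inhabits ((fun _ => false) : cantor))
   (fun a => A a /\ prefix a (length (hinv m)) = hinv m).

Definition Bset (L : cantor) : Prop :=
  ~ ((exists m, Ex m /\ bad hinv L (am m)) \/
     (A (phi px L) /\ bad hinv L (phi px L)) \/
     (A (psi px L) /\ bad hinv L (psi px L))).

Lemma Bset_borel : borel_cantor Bset.
Proof.
  apply borel_compl'. apply borel_or; [|apply borel_or].
  - apply borel_cunion'; intros m. apply borel_and_const. apply (bad_borel hinv (fun _ => am m)).
    apply meas_const.
  - apply borel_and; [apply (meas_borel _ A); auto|apply bad_borel]; apply (meas_phi h hinv hinv_h).
  - apply borel_and; [apply (meas_borel _ A); auto|apply bad_borel]; apply (meas_psi h hinv hinv_h).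
Qed.

Lemma exists_bad L : (exists y, A y /\ bad hinv L y) ->
  (exists m, Ex m /\ bad hinv L (am m)) \/
     (A (phi px L) /\ bad hinv L (phi px L)) \/
     (A (psi px L) /\ bad hinv L (psi px L)).
Proof.
  intros [y [Ay Hb]]. assert (Hy := HAnec y Ay).
  destruct (proj1 (bad_UV L y Hy) Hb) as [HU HV].
  destruct (classic (exists u, ~ eventually_constant u /\ lex_lt u y /\ bad hinv L u)) as [Hu|Hu];
  [destruct (classic (exists v, ~ eventually_constant v /\ lex_lt y v /\ bad hinv L v)) as [Hv|Hv]|].
  - left. destruct Hu as [u [Hu1 [Hu2 Hu3]]]. destruct Hv as [v [Hv1 [Hv2 Hv3]]].
    destruct (lex_lt_open_r _ _ Hu2) as [m1 Hm1]. destruct (lex_lt_open_l _ _ Hv2) as [m2 Hm2].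
    set (t := prefix y (max m1 m2)). exists (h t).
    assert (HE : Ex (h t)). { exists y. rewrite hinv_h. split; auto. unfold t. rewrite prefix_length; auto. }
    split; auto.
    assert (Ha := epsilon_spec (inhabits ((fun _ => false) : cantor))
                    (fun a => A a /\ prefix a (length (hinv (h t))) = hinv (h t)) HE).
    fold (am (h t)) in Ha. destruct Ha as [Aa Pa]. rewrite hinv_h in Pa.
    unfold t in Pa. rewrite prefix_length in Pa.
    assert (Hag : agree (max m1 m2) y (am (h t))) by (apply agree_prefix; auto).
    assert (L1 : lex_lt u (am (h t))) by (apply Hm1; eapply agree_mono; [|eauto]; lia).
    assert (L2 : lex_lt (am (h t)) v) by (apply Hm2; eapply agree_mono; [|eauto]; lia).
    assert (Hn := HAnec _ Aa).
    apply (bad_UV L _ Hn).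
    destruct (proj1 (bad_UV L u Hu1) Hu3) as [U1 _]. destruct (proj1 (bad_UV L v Hv1) Hv3) as [_ V1].
    split; intros k.
    + destruct (U1 k) as [n [? [? ?]]]. exists n. repeat split; auto. eapply lex_lt_trans; eauto.
    + destruct (V1 k) as [n [? [? ?]]]. exists n. repeat split; auto. eapply lex_lt_trans; eauto.
  - right; right.
    assert (E : psi px L = y).
    { apply functional_extensionality. apply psi_max; auto.
      intros z Hz Hlt HVz. apply Hv. exists z. split; [auto|split; [auto|]]. apply (bad_UV L z Hz). split; auto.
      intros k. destruct (HU k) as [n [? [? ?]]]. exists n. repeat split; auto. eapply lex_lt_trans; eauto. }
    rewrite E. auto.
  - right; left.
    assert (E : phi px L = y).
    { apply functional_extensionality. apply phi_min; auto.
      intros z Hz Hlt HUz. apply Hu. exists z. split; [auto|split; [auto|]]. apply (bad_UV L z Hz). split; auto.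
      intros k. destruct (HV k) as [n [? [? ?]]]. exists n. repeat split; auto. eapply lex_lt_trans; eauto. }
    rewrite E. auto.
Qed.

Lemma borel_part : borel_in infinite_set (LA hinv A).
Proof.
  exists Bset. split; [apply Bset_borel|]. intros L. rewrite LA_iff. unfold Bset. split.
  - intros [Hi H]. split; auto. intros Hd. 
    destruct Hd as [[m [[a [Aa Pa]] Hb]]|[[Aa Hb]|[Aa Hb]]].
    + apply (H (am m)); auto.
      assert (Ha := epsilon_spec (inhabits ((fun _ => false) : cantor))
                    (fun a => A a /\ prefix a (length (hinv m)) = hinv m) (ex_intro _ a (conj Aa Pa))).
      apply Ha.
    + apply (H _ Aa Hb).
    + apply (H _ Aa Hb).
  - intros [Hi H]. split; auto. intros y Ay Hb. apply H. apply exists_bad. eauto.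
Qed.
End BorelPart.

Theorem proposition5p5
  (h : list bool -> nat) (hinv : nat -> list bool)
  (h_hinv : forall n, h (hinv n) = n) (hinv_h : forall s, hinv (h s) = s)
  (h_mono : forall s t, (length s < length t)%nat -> (h s < h t)%nat)
  (A : cantor -> Prop)
  (HA : analytic_cantor A)
  (HAnec : forall x, A x -> ~ eventually_constant x) :
  (exists H : cantor -> cantor,
     cont_cc H /\ (forall x, infinite_set (H x)) /\
     (forall x, LA hinv A (H x) <-> ~ A x)) /\
  (Sigma11_complete A -> Pi11_complete_in infinite_set (LA hinv A)) /\
  (borel_cantor A -> borel_in infinite_set (LA hinv A)).
Proof.
  destruct (part1 h hinv h_hinv hinv_h h_mono A HAnec) as [H [Hc [Hi HL]]].
  split; [exists H; auto|split].
  - intros [_ Hcomp]. split.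
    + destruct HA as [Hemp|[fA [Hc' [_ Him]]]].
      * split; [intros x [Hx _]; auto|]. left. intros x [Hx Hn]. apply Hn. rewrite LA_iff.
        split; auto. intros y Ay. exfalso; eapply Hemp; eauto.
      * apply (coanalytic_part h hinv hinv_h h_mono A HAnec fA); auto.
    + intros X B HB. destruct (Hcomp X (fun x => ~ B x) HB) as [g [Hg Hgr]].
      exists (fun x => H (g x)). split; [|split; auto].
      * intros U HU. apply (Hg (fun z => U (H z))). intros z Hz. destruct (HU _ Hz) as [n Hn].
        destruct (Hc z n) as [m Hm]. exists m. intros y Ha. apply Hn. apply Hm; auto.
      * intros x. rewrite HL, <- Hgr. split; [tauto|intros; apply NNPP; auto].
  - intros HB. apply (borel_part h hinv hinv_h A HAnec HB).
Qed.
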